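(* Let $d\ge1$ and let $y=(y_S)_{S\in\mathcal{V}_{n,2d}}$ be a vector over $\mathbb{F}_q$. Suppose $H_d(y)$ is nonzero and $\operatorname{rank}H_d(y)\le d$. Then there exists $e\in\{0,1,\dots,d-1\}$ such that $r_e=r_{e+1}>0$.
   Context: $\mathbb{F}_q$ is a finite field. $\mathcal{V}_{n,j}:=\{S\subseteq\{1,\dots,n\}:0\le|S|\le j\}$ (including $\emptyset$). For $0\le e\le d$, $H_e(y)$ is the matrix with rows and columns indexed by $\mathcal{V}_{n,e}$ and $(S,T)$ entry $y_{S\cup T}$, and $r_e:=\operatorname{rank}H_e(y)$. *)

(* Defs.v *)
From HB Require Import structures.
From mathcomp Require Import all_boot all_order all_algebra all_field.
Set Implicit Arguments. Unset Strict Implicit. Unset Printing Implicit Defensive.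
Import GRing.Theory.
Local Open Scope ring_scope.

Definition Vset (n j : nat) : {set {set 'I_n}} := [set S : {set 'I_n} | (#|S| <= j)%N].

(* The vector y is given as a function on
   all subsets; only its values on V_{n,2e} are ever used. *)
Definition Hmx (F : fieldType) (n e : nat) (y : {set 'I_n} -> F)
  : 'M[F]_(#|Vset n e|) :=
  \matrix_(i, j) y (enum_val i :|: enum_val j).

Definition rk (F : fieldType) (n e : nat) (y : {set 'I_n} -> F) : nat :=
  \rank (Hmx e y).

(* Main.v *)
Require Import Defs.
From HB Require Import structures.
From mathcomp Require Import all_boot all_order all_algebra all_field.
From mathcomp Require Import zify.
Import GRing.Theory.
Local Open Scope ring_scope.

Lemma map_index (T : eqType) (s : seq T) : uniq s -> map (index^~ s) s = iota 0 (size s).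
Proof.
move=> us; apply: (@eq_from_nth _ 0%N); first by rewrite size_map size_iota.
move=> i; rewrite size_map => hi.
case: s us hi => [//|x s'] us hi.
by rewrite (nth_map x) // nth_iota // index_uniq.
Qed.

Lemma count_win j e k : count (fun p => (j <= p < j + e)%N) (iota 0 k) = (minn k (j+e) - j)%N.
Proof.
elim: k => [|k IH]; first by rewrite /= min0n.
rewrite -addn1 iotaD count_cat IH /= add0n addn0.
by case: (boolP ((j <= k) && (k < j + e)))%N => /= h; rewrite ?h /=; lia.
Qed.

Lemma cardQ (T : finType) (W : {set T}) (Q : pred T) :
  #|[set x in W | Q x]| = count Q (enum W).
Proof.
rewrite -sum1_card -sum1_count big_enum_cond /=.
by apply: eq_bigl => x; rewrite inE.
Qed.

Lemma sub_rank (F : fieldType) n e (y : {set 'I_n} -> F) m (f g : 'I_m -> {set 'I_n}) :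
  (forall i, #|f i| <= e)%N -> (forall i, #|g i| <= e)%N ->
  (\rank (\matrix_(i, j) y (f i :|: g j)) <= rk e y)%N.
Proof.
move=> hf hg.
have h0 : set0 \in Vset n e by rewrite inE cards0.
pose idx := enum_rank_in h0.
have -> : \matrix_(i, j) y (f i :|: g j) = rowsub (idx \o f) (colsub (idx \o g) (Hmx e y)).
  by apply/matrixP=> i j; rewrite !mxE /= !enum_rankK_in // inE.
rewrite rowsubE; apply: leq_trans (mxrankM_maxr _ _) _.
rewrite -[Hmx e y]mulmx1 -mulmx_colsub; exact: mxrankM_maxl.
Qed.

Lemma rk_mono (F : fieldType) n e (y : {set 'I_n} -> F) : (rk e y <= rk e.+1 y)%N.
Proof.
rewrite {1}/rk.
have -> : Hmx e y = \matrix_(i, j) y (enum_val i :|: enum_val j) by [].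
by apply: sub_rank => i; have := enum_valP i; rewrite inE => /leq_trans; apply.
Qed.

Lemma low_rank (F : fieldType) n (y : {set 'I_n} -> F) (W : {set 'I_n}) (e0 : nat) :
  y W != 0 -> (forall V : {set 'I_n}, (#|V| < #|W|)%N -> y V = 0) ->
  (#|W| <= e0.*2 <= #|W|.+1)%N -> (e0.+1 <= rk e0 y)%N.
Proof.
move=> yW hmin /andP[hk1 hk2].
set k := #|W|; set s := enum W.
have us : uniq s by exact: enum_uniq.
have ks : size s = k by rewrite /s -cardE.
pose P j := (fun p => j <= p < j + e0)%N.
pose S j := [set x in W | P j (index x s)].
pose T j := [set x in W | ~~ P j (index x s)].
have cS j : #|S j| = count (P j) (iota 0 k).
  by rewrite /S cardQ -/s -[in iota _ _]ks -(@map_index _ s us) count_map.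
have cT j : #|T j| = count (predC (P j)) (iota 0 k).
  by rewrite /T cardQ -/s -[in iota _ _]ks -(@map_index _ s us) count_map.
have sz : forall j : 'I_e0.+1, (#|S j| <= e0)%N /\ (#|T j| <= e0)%N.
  move=> j; rewrite cT cS; have := count_predC (P j) (iota 0 k).
  rewrite size_iota /P count_win; have := ltn_ord j; lia.
have := @sub_rank F n e0 y e0.+1 (fun i => T i) (fun j => S j)
   (fun i => (sz i).2) (fun j => (sz j).1).
apply: leq_trans; rewrite mxrank_unit // unitmxE unitfE det_trig.
  rewrite (eq_bigr (fun _ => y W)); last first.
    move=> i _; rewrite mxE; congr (y _); apply/setP => x; rewrite !inE.
    by case: (x \in W); case: (P i _).
  by rewrite prodr_const expf_neq0.
apply/is_trig_mxP => i j lij; rewrite mxE; apply: hmin.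
apply: proper_card; rewrite properE; apply/andP; split.
  by rewrite subUset; apply/andP; split; apply/subsetP => x; rewrite inE => /andP[].
have kpos : (0 < k)%N by have := ltn_ord j; lia.
have [x0 _] : exists x0 : 'I_n, true.
  by move: kpos; rewrite /k card_gt0 => /set0Pn [x0 _]; exists x0.
have ik : (i < size s)%N by rewrite ks; have := ltn_ord j; lia.
apply/subsetPn; exists (nth x0 s i).
  by rewrite -mem_enum mem_nth.
rewrite !inE index_uniq // /P negb_or.
have jl := ltn_ord j.
have -> : (i <= i < i + e0)%N by apply/andP; split; lia.
have -> : (j <= i)%N = false by lia.
by rewrite !andbF.
Qed.

Theorem lemma4p3 (F : finFieldType) (n d : nat) (y : {set 'I_n} -> F) :
  (1 <= d)%N ->
  Hmx d y != 0 ->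
  (rk d y <= d)%N ->
  exists e : nat, [/\ (e < d)%N, rk e y = rk e.+1 y & (0 < rk e y)%N].
Proof.
move=> d1 Hnz rkd.
have [i [j hij]] := matrix0Pn _ Hnz; rewrite mxE in hij.
set W0 := enum_val i :|: enum_val j in hij.
have W0d : (#|W0| <= d.*2)%N.
  have := enum_valP i; have := enum_valP j; rewrite !inE => hj hi.
  rewrite /W0 cardsU -addnn; lia.
case: (@arg_minnP _ W0 (fun V => y V != 0) (fun V : {set 'I_n} => #|V|) hij) => W yW Wmin.
have hmin : forall V : {set 'I_n}, (#|V| < #|W|)%N -> y V = 0.
  move=> V lt; apply/eqP; apply: contraTT lt => nz; rewrite -leqNgt; exact: Wmin.
have [e0 he0] : exists e0, (#|W| <= e0.*2 <= #|W|.+1)%N.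
  by exists (uphalf #|W|); rewrite -leq_uphalf_double -geq_uphalf_double !leqnn.
have low := @low_rank _ _ _ _ _ yW hmin he0.
have WW0 := Wmin _ hij.
have e0d : (e0 <= d)%N by move: he0 W0d; rewrite -!muln2; lia.
case: (boolP [exists e : 'I_d, (rk e y == rk e.+1 y) && (0 < rk e y)%N]).
  by move=> /existsP [e /andP[/eqP h1 h2]]; exists e.
move=> /existsPn hno; exfalso.
have step : forall m, (m <= d - e0)%N -> (rk e0 y + m <= rk (e0 + m) y)%N.
  elim => [|m IH] hm; first by rewrite !addn0.
  have h1 := IH (ltnW hm).
  have mono := @rk_mono _ _ (e0 + m)%N y.
  have lt : (e0 + m < d)%N by lia.
  have := hno (Ordinal lt); rewrite /= negb_and -leqNgt.
  rewrite (addnS e0 m); case/orP => [/eqP ne|h0].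
  have lt2 : (rk (e0 + m) y < rk (e0 + m).+1 y)%N.
    by rewrite ltn_neqAle mono andbT; apply/eqP.
  by rewrite addnS; exact: (leq_ltn_trans h1 lt2).
move: h0 h1 low; rewrite leqn0 => /eqP ->; lia.
have := step (d - e0)%N (leqnn _); rewrite subnKC //; lia.
Qed.
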